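(* There exists a constant $C$ such that for all $x,y\in[0,1]$, $\zeta(xy)\leq C\,\zeta(x)\,\zeta(y)$.
   Context: $\zeta(x)=\frac{1}{2\sqrt2}\int_0^x\sqrt{\frac{\log(1+u^{-2})}{u}}\,du$ for $x\geq0$. *)

(* Defs.v *)
From mathcomp Require Import all_boot all_order all_algebra.
From mathcomp Require Import all_classical all_reals all_analysis.
Set Implicit Arguments. Unset Strict Implicit. Unset Printing Implicit Defensive.
Import Order.TTheory GRing.Theory Num.Theory.
Local Open Scope classical_set_scope.
Local Open Scope ring_scope.

Definition zeta_integrand {R : realType} (u : R) : R :=
  Num.sqrt (ln (1 + u ^- 2) / u).

(* zeta(x) = 1/(2 sqrt 2) * \int_0^x sqrt(log(1+u^{-2})/u) du  (Lebesgue integral;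
   the integrand is nonnegative and integrable near 0, so the integral is finite) *)
Definition zeta {R : realType} (x : R) : R :=
  (2 * Num.sqrt 2)^-1 *
    fine (\int[@lebesgue_measure R]_(u in `[0%R, x]%classic) (zeta_integrand u)%:E)%E.

(* Main.v *)
Require Import Defs.
From mathcomp Require Import all_boot all_order all_algebra.
From mathcomp Require Import all_classical all_reals all_analysis.
From mathcomp Require Import measurable_realfun.
From mathcomp Require Import ring lra.
Import Order.TTheory GRing.Theory Num.Theory.
Import numFieldNormedType.Exports.
Local Open Scope classical_set_scope.
Local Open Scope ring_scope.
Section S.
Context {R : realType}.
Local Notation f := (@zeta_integrand R).
Local Notation mu := (@lebesgue_measure R).
Definition L (u : R) := ln (1 + u ^- 2).
Definition cK : R := 2 / ln 2.

Lemma ln2_gt0 : 0 < ln (2:R).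
Proof. by apply: ln_gt0; rewrite ltr1n. Qed.

Lemma L_ge (u : R) : 0 < u <= 1 -> ln 2 <= L u.
Proof.
move=> /andP[u0 u1]; rewrite /L ler_ln ?posrE ?ltr0n //; last first.
  by rewrite ltr_pwDl // invr_ge0 exprn_even_ge0.
rewrite [2%R]/(1 + 1) lerD2l invf_ge1 ?exprn_gt0 //.
by rewrite expr_le1 // ltW.
Qed.

Lemma L_mul (x y : R) : 0 < x -> 0 < y -> L (x * y) <= L x + L y.
Proof.
move=> x0 y0; rewrite /L -lnM ?posrE ?ltr_pwDl ?invr_ge0 ?exprn_even_ge0 //.
rewrite ler_ln ?posrE ?ltr_pwDl ?invr_ge0 ?exprn_even_ge0 ?mulr_gt0 ?ltr_pwDl ?invr_ge0 ?exprn_even_ge0 //.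
rewrite exprMn invfM mulrDl mul1r mulrDr mulr1 addrA lerD2r.
by rewrite -addrA lerDl addr_ge0 // invr_ge0 exprn_even_ge0.
Qed.

Lemma L_prod (x y : R) : 0 < x <= 1 -> 0 < y <= 1 -> L (x * y) <= cK * L x * L y.
Proof.
move=> hx hy; have l2 := ln2_gt0.
have hLx := L_ge x hx; have hLy := L_ge y hy.
case/andP: hx => x0 _; case/andP: hy => y0 _.
apply: (le_trans (L_mul x y x0 y0)).
have e1 : L x <= L x * L y / ln 2.
  by rewrite -mulrA ler_peMr ?ler_pdivlMr ?mul1r // (le_trans (ltW l2)).
have e2 : L y <= L x * L y / ln 2.
  by rewrite [L x * _]mulrC -mulrA ler_peMr ?ler_pdivlMr ?mul1r // (le_trans (ltW l2)).
apply: (le_trans (lerD e1 e2)); rewrite le_eqVlt; apply/orP; left; apply/eqP.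
rewrite /cK; ring.
Qed.

Definition cc : R := Num.sqrt cK.

Lemma cK_ge0 : 0 <= cK.
Proof. by rewrite /cK divr_ge0 // ltW // ln2_gt0. Qed.

Lemma L_ge0 (u : R) : 0 <= L u.
Proof. by apply: ln_ge0; rewrite lerDl invr_ge0 exprn_even_ge0. Qed.

Lemma zi_nonpos (u : R) : u <= 0 -> zeta_integrand u = 0.
Proof.
move=> u0; rewrite /zeta_integrand ler0_sqrtr //.
apply: mulr_ge0_le0; first by apply: ln_ge0; rewrite lerDl invr_ge0 exprn_even_ge0.
by rewrite invr_le0.
Qed.

Lemma zi_ge0 (u : R) : 0 <= zeta_integrand u.
Proof. exact: sqrtr_ge0. Qed.

Lemma zi_mul (x y : R) : 0 <= x <= 1 -> 0 <= y <= 1 ->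
  f (x * y) <= cc * f x * f y.
Proof.
move=> /andP[x0 x1] /andP[y0 y1].
have rhs0 : 0 <= cc * f x * f y by rewrite !mulr_ge0 ?zi_ge0 ?sqrtr_ge0.
have [->|xn0] := eqVneq x 0; first by rewrite mul0r zi_nonpos // mulr0 mul0r.
have [->|yn0] := eqVneq y 0; first by rewrite mulr0 zi_nonpos // mulr0.
have xp : 0 < x by rewrite lt_neqAle eq_sym xn0.
have yp : 0 < y by rewrite lt_neqAle eq_sym yn0.
rewrite /cc /zeta_integrand -sqrtrM ?cK_ge0 // -sqrtrM; last first.
  by rewrite mulr_ge0 ?cK_ge0 // divr_ge0 ?L_ge0 // ltW.
rewrite -/(L x) -/(L y) -/(L (x * y)).
have hxL : 0 <= L x / x by rewrite divr_ge0 ?L_ge0 // ltW.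
have hyL : 0 <= L y / y by rewrite divr_ge0 ?L_ge0 // ltW.
rewrite ler_sqrt; last by rewrite mulr_ge0 // mulr_ge0 // cK_ge0.
have -> : cK * (L x / x) * (L y / y) = cK * L x * L y / (x * y) by rewrite invfM; ring.
rewrite ler_pM2r ?invr_gt0 ?mulr_gt0 //.
apply: L_prod; apply/andP; split => //.
Qed.

Lemma zi_decr (u v : R) : 0 < u -> u <= v -> f v <= f u.
Proof.
move=> u0 uv; have v0 := lt_le_trans u0 uv.
rewrite /zeta_integrand -/(L u) -/(L v) ler_sqrt; last by rewrite divr_ge0 ?L_ge0 // ltW.
have Luv : L v <= L u.
  rewrite /L ler_ln ?posrE ?ltr_pwDl ?invr_ge0 ?exprn_even_ge0 // lerD2l.
  by rewrite lef_pV2 ?posrE ?exprn_gt0 // lerXn2r // ?nnegrE ltW.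
apply: (le_trans (ler_wpM2r _ Luv)); first by rewrite invr_ge0 ltW.
by rewrite ler_wpM2l ?L_ge0 // lef_pV2.
Qed.
Lemma scale_preimage (a x1 x2 : R) : 0 < a ->
  ( *%R a) @^-1` `]x1, x2]%classic = `]x1 / a, x2 / a]%classic.
Proof.
move=> a0; apply/seteqP; split => t /=; rewrite !in_itv /=.
  by move=> /andP[h1 h2]; rewrite ltr_pdivrMr // ler_pdivlMr // ![t * a]mulrC h1 h2.
by move=> /andP[h1 h2]; rewrite ltr_pdivrMr // ler_pdivlMr // ![t * a]mulrC in h1 h2; rewrite h1 h2.
Qed.

Lemma mphi (a : R) : measurable_fun setT (( *%R a) : measurableTypeR R -> measurableTypeR R).
Proof. exact: mulrl_measurable. Qed.

Lemma scale_measure (a : R) (a0 : 0 < a) (A : set R) : measurable A ->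
  mu A = (a%:E * pushforward mu (( *%R a) : measurableTypeR R -> measurableTypeR R) A)%E.
Proof.
move=> mA.
pose k : {nonneg R} := NngNum (ltW a0).
rewrite (@lebesgue_measure_unique R (mscale k (pushforward mu (( *%R a) : measurableTypeR R -> measurableTypeR R))) _ A mA) //.
move=> _ [[x1 x2] _ <-] /=.
rewrite /mscale /=; rewrite /pushforward scale_preimage //.

rewrite !lebesgue_measure_itv /= !lte_fin ltr_pM2r ?invr_gt0 //.

case: ifPn => _; last by rewrite mule0.
by rewrite -!EFinD -EFinM mulrDr mulrN !(mulrC a) !mulfVK ?gt_eqF.

Qed.

Lemma scale_preimage01 (a : R) : 0 < a ->
  ( *%R a) @^-1` `[0, a]%classic = `[0, 1]%classic.
Proof.
move=> a0; apply/seteqP; split => t /=; rewrite !in_itv /=.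
  move=> /andP[h1 h2]; rewrite pmulr_rge0 // in h1; rewrite h1 /=.
  by rewrite -(ler_pM2l a0) mulr1.
by move=> /andP[h1 h2]; rewrite mulr_ge0 ?(ltW a0) //= ler_piMr // ltW.

Qed.

Lemma scale_integral (a : R) (f : R -> \bar R) : 0 < a ->
  measurable_fun setT f -> (forall x, (0 <= f x)%E) ->
  (\int[mu]_(x in `[0%R, a]%classic) f x = a%:E * \int[mu]_(t in `[0%R, 1%R]%classic) f (a * t)%R)%E.
Proof.
move=> a0 mf f0.
pose k : {nonneg R} := NngNum (ltW a0).
pose phi := (( *%R a) : measurableTypeR R -> measurableTypeR R).
pose nu := measure_function_pushforward__canonical__measure_function_Measure mu (mphi a).
transitivity (\int[mscale k nu]_(x in `[0%R, a]%classic) f x)%E.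
  apply: eq_measure_integral => A mA _.
  by rewrite /mscale /= (@scale_measure a a0).
rewrite ge0_integral_mscale //; last exact: measurable_funTS.
rewrite (ge0_integral_pushforward (mphi a)) //; last exact: measurable_funTS.
by rewrite scale_preimage01.
Qed.
Lemma zi_cont (x : R) : 0 < x -> {for x, continuous (zeta_integrand : R -> R)}.
Proof.
move=> hx.
have h1 : {for x, continuous (fun u : R => 1 + u ^- 2)}.
  apply: cvgD; first exact: cvg_cst.
  apply: (@continuousV _ _ (fun u : R => u ^+ 2)); first by rewrite expf_neq0 // gt_eqF.
  exact: exprn_continuous.
have h2 : {for x, continuous (fun u : R => ln (1 + u ^- 2))}.
  apply: (continuous_comp h1); apply: continuous_ln.
  by rewrite ltr_pwDl // invr_ge0 exprn_even_ge0.
have h3 : {for x, continuous (fun u : R => ln (1 + u ^- 2) / u)}.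
  by apply: cvgM => //; apply: inv_continuous; rewrite gt_eqF.
exact: (continuous_comp h3 (@sqrt_continuous R _)).
Qed.

Lemma zi_meas : measurable_fun setT (@zeta_integrand R).
Proof.
have -> : [set: R] = `]-oo, 0%R] `|` `]0%R, +oo[.
  by rewrite -setCitvl setUCr.
apply/measurable_funU => //; split.
  apply: (@eq_measurable_fun _ _ _ _ _ (cst (0:R))); last exact: measurable_cst.
  move=> u; rewrite inE /= in_itv /= => u0; by rewrite zi_nonpos.
apply: open_continuous_measurable_fun; first exact: interval_open.
by move=> u; rewrite inE /= in_itv /= andbT => u0; apply: zi_cont.
Qed.


Lemma zi_measE : measurable_fun setT (fun u : R => (zeta_integrand u)%:E).
Proof. by apply/measurable_EFinP; exact: zi_meas. Qed.

Definition F (a : R) : \bar R :=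
  (\int[mu]_(u in `[0%R, a]%classic) (f u)%:E)%E.

Lemma F_ge0 (a : R) : (0 <= F a)%E.
Proof. by apply: integral_ge0 => t _; rewrite lee_fin zi_ge0. Qed.

Lemma zi_comp_meas (a : R) : measurable_fun setT (fun t : R => (f (a * t))%:E).
Proof.
apply/measurable_EFinP.
apply: measurableT_comp; [exact: zi_meas | exact: mulrl_measurable].
Qed.

Lemma F_scale_le (a : R) : 0 < a <= 1 -> (F a <= (cc * f a * a)%:E * F 1%R)%E.
Proof.
move=> /andP[a0 a1].
rewrite /F (scale_integral a _ a0 zi_measE); last by move=> t; rewrite lee_fin zi_ge0.
have mcf : measurable_fun (`[0%R, 1%R]%classic : set R) (fun t : R => ((cc * f a) * f t)%:E).
  apply/measurable_EFinP; apply: measurable_funM; first exact: measurable_cst.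
  exact: measurable_funTS zi_meas.
rewrite (@le_trans _ _ (a%:E * \int[mu]_(t in `[0%R, 1%R]%classic) ((cc * f a) * f t)%:E)%E) //.
  apply: lee_wpmul2l; first by rewrite lee_fin ltW.
  apply: ge0_le_integral => //.
  - by move=> t _; rewrite lee_fin zi_ge0.
  - exact: measurable_funTS (zi_comp_meas a).
  - move=> t; rewrite /= in_itv /= => /andP[t0 t1]; rewrite lee_fin.
    by rewrite zi_mul ?a1 ?t0 ?t1 ?ltW.
under eq_integral do rewrite EFinM.
rewrite ge0_integralZl //.
- by rewrite muleA -EFinM mulrC.
- exact: measurable_funTS zi_measE.
- by move=> t _; rewrite lee_fin zi_ge0.
- by rewrite lee_fin mulr_ge0 ?zi_ge0 ?sqrtr_ge0.
Qed.

Lemma F_scale_ge (a : R) : 0 < a <= 1 -> (a%:E * F 1%R <= F a)%E.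
Proof.
move=> /andP[a0 a1].
rewrite /F [X in (_ <= X)%E](scale_integral a _ a0 zi_measE); last by move=> t; rewrite lee_fin zi_ge0.
apply: lee_wpmul2l; first by rewrite lee_fin ltW.
apply: ge0_le_integral => //.
- by move=> t _; rewrite lee_fin zi_ge0.
- exact: measurable_funTS zi_measE.
- exact: measurable_funTS (zi_comp_meas a).
- move=> t; rewrite /= in_itv /= => /andP[t0 t1]; rewrite lee_fin.
  have [->|tn0] := eqVneq t 0; first by rewrite mulr0 zi_nonpos.
  have tp : 0 < t by rewrite lt_neqAle eq_sym tn0.
  apply: zi_decr; first by rewrite mulr_gt0.
  by rewrite ler_piMl // ltW.
Qed.

Lemma F_ge (a : R) : 0 < a -> ((a * f a)%:E <= F a)%E.
Proof.
move=> a0.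
apply: (@le_trans _ _ (\int[mu]_(u in `]0%R, a]%classic) (f u)%:E)%E); last first.
  apply: ge0_subset_integral => //.
  - exact: measurable_funTS zi_measE.
  - by move=> t _; rewrite lee_fin zi_ge0.
  - by apply: subset_itv; rewrite ?bnd_simp.
apply: (@le_trans _ _ (\int[mu]_(u in `]0%R, a]%classic) (cst (f a)%:E u))%E).
  rewrite integral_cst // [X in (_ * X)%E](_ : _ = a%:E); last first.
    by have := lebesgue_measure_itv `]0%R, a]; rewrite /= lte_fin a0 -EFinD subr0.
  by rewrite -EFinM mulrC.
apply: ge0_le_integral => //.
- by move=> t _; rewrite lee_fin zi_ge0.
- exact: measurable_funTS zi_measE.
- move=> t; rewrite /= in_itv /= => /andP[t0 t1]; rewrite lee_fin.
  exact: zi_decr.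
Qed.

Lemma F_mono (a : R) : a <= 1 -> (F a <= F 1%R)%E.
Proof.
move=> a1; apply: ge0_subset_integral => //.
- exact: measurable_funTS zi_measE.
- by move=> t _; rewrite lee_fin zi_ge0.
- by apply: subset_itv; rewrite ?bnd_simp.
Qed.

Lemma F0 : F 0 = 0%E.
Proof. by rewrite /F set_itv1 integral_set1. Qed.
End S.

Theorem mainTheorem4 (R : realType) :
  exists C : R, forall x y : R, 0 <= x <= 1 -> 0 <= y <= 1 ->
    zeta (x * y) <= C * zeta x * zeta y.
Proof.
pose k : R := (2 * Num.sqrt 2)^-1.
have s2 : 0 < 2 * Num.sqrt (2:R) by rewrite mulr_gt0 ?sqrtr_gt0 ?ltr0n.
have kp : 0 < k by rewrite invr_gt0.
have zE : forall a : R, zeta a = k * fine (F a) by [].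
exists (cc * cc * fine (F 1) * (2 * Num.sqrt 2)).
move=> x y /andP[x0 x1] /andP[y0 y1].
have [->|xn0] := eqVneq x 0.
  by rewrite mul0r !zE F0 /= !mulr0 mul0r.
have [->|yn0] := eqVneq y 0.
  by rewrite mulr0 !zE F0 /= !mulr0.
have xp : 0 < x by rewrite lt_neqAle eq_sym xn0.
have yp : 0 < y by rewrite lt_neqAle eq_sym yn0.
have ap : 0 < x * y by rewrite mulr_gt0.
have a1 : x * y <= 1 by exact: mulr_ile1.
have F1ge0 := @F_ge0 R 1.
case E1 : (F 1) F1ge0 => [r| |] // r0.
-
  have fin (a : R) : a <= 1 -> F a = (fine (F a))%:E.
    move=> ha; rewrite fineK // ge0_fin_numE ?F_ge0 //.
    by apply: (le_lt_trans (F_mono a ha)); rewrite E1 ltry.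
  have h1 : fine (F (x * y)) <= cc * zeta_integrand (x * y) * (x * y) * r.
    have := F_scale_le (x * y) (introT andP (conj ap a1)).
    by rewrite E1 (fin _ a1) -EFinM lee_fin.
  have h2x : x * zeta_integrand x <= fine (F x).
    by have := F_ge x xp; rewrite (fin _ x1) lee_fin.
  have h2y : y * zeta_integrand y <= fine (F y).
    by have := F_ge y yp; rewrite (fin _ y1) lee_fin.
  have h3 := zi_mul x y (introT andP (conj x0 x1)) (introT andP (conj y0 y1)).
  rewrite !zE /=.
  have -> : cc * cc * r * (2 * Num.sqrt 2) * (k * fine (F x)) * (k * fine (F y))
      = k * (cc * cc * r * (fine (F x) * fine (F y))).
    rewrite /k; field; by rewrite gt_eqF.
  apply: ler_wpM2l; first exact: ltW.
  have ccge0 : 0 <= cc :> R by rewrite /cc sqrtr_ge0.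
  have rr : 0 <= r by rewrite -lee_fin; exact: r0.
  apply: (le_trans h1).
  apply: (@le_trans _ _ (cc * (cc * zeta_integrand x * zeta_integrand y) * (x * y) * r)).
    apply: ler_wpM2r => //; apply: ler_wpM2r; first exact: ltW.
    exact: ler_wpM2l.
  have -> : cc * (cc * zeta_integrand x * zeta_integrand y) * (x * y) * r = cc * cc * r * ((x * zeta_integrand x) * (y * zeta_integrand y)) by ring.
  apply: ler_wpM2l; first by rewrite !mulr_ge0.
  by apply: ler_pM => //; rewrite mulr_ge0 ?zi_ge0 // ltW.
-
  have : (+oo <= F (x * y))%E.
    have := F_scale_ge (x * y) (introT andP (conj ap a1)).
    by rewrite E1 gt0_muley ?lte_fin.
  rewrite leye_eq => /eqP Fa.
  by rewrite zE Fa /= !mulr0 !mul0r.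
Qed.
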